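(* Let $G=(V,E)$ be a finite simple strongly connected directed graph with a fixed total order on $V$, let $W\subseteq V$ be strongly connected and $w\in W$. For each spanning tree $\mathbf b$ rooted at $w$ with $\psi(\mathbf b)=W$, define the formal signed combination of forests rooted in $W$ $$\nu_{\mathbf b}=\sum_{\mathfrak F\subseteq\mathfrak E_{\mathbf b}}(-1)^{|\mathfrak F|}\,\delta_{\mathbf f_{\mathfrak F}},$$ with $\mathfrak E_{\mathbf b}$ and $\mathbf f_{\mathfrak F}$ as below. Then the family $(\nu_{\mathbf b})$, indexed by all spanning trees $\mathbf b$ rooted at $w$ with $\psi(\mathbf b)=W$, is linearly independent in the vector space with basis $\{\delta_{\mathbf f}\}$ indexed by forests of $G$ rooted in $W$.
   Context: A spanning tree of $G$ is a subgraph on all vertices with no cycle, one vertex (root) of outdegree $0$ and all others of outdegree $1$. For nonempty $U\subseteq V$, a forest rooted in $U$ is a subgraph on all vertices with no cycle in which vertices of $U$ have outdegree $0$ and all others outdegree $1$. Exploration algorithm (depends on the fixed total order of $V$). Input: a spanning tree $\mathbf a$ rooted at $v$. Initialize $A=\{v\}$, $F=\{e: s(e)\neq v\}$, $\mathbf L$ = FIFO list of edges with target $v$, by increasing source. While $\mathbf L$ is nonempty, take its first edge $e$, with source $u$: if $e\in\mathbf a$, add $u$ to $A$, delete from $\mathbf L$ (and $F$) all edges with source $u$, and append to $\mathbf L$ all edges of $F$ with target $u$ by increasing source; otherwise delete from $\mathbf L$ and $F$ all edges with source or target $u$, and $u$ is said to be erased by the edge $e$. At the end $\phi(\mathbf a)=A$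 and $\psi(\mathbf a)$ is the strongly connected component of $v$ in the induced graph $G_{\phi(\mathbf a)}$. For a tree $\mathbf b$ as in the claim: $\mathbf f$ is the set of edges of $\mathbf b$ whose source is not in $W$; $\mathfrak E_{\mathbf b}$ is the set of vertices erased when running the algorithm on $\mathbf b$; for $u\in\mathfrak E_{\mathbf b}$, $e(u)$ is the edge that erased $u$; for $\mathfrak F\subseteq\mathfrak E_{\mathbf b}$, $\mathbf f_{\mathfrak F}$ is obtained from $\mathbf f$ by replacing, for each $u\in\mathfrak F$, the edge of $\mathbf f$ going out of $u$ by $e(u)$ (it is a forest rooted in $W$). *)

(* Defs.v *)
(* Vertex set V = 'I_n, totally ordered by the natural order on ordinals. *)
From HB Require Import structures.
From mathcomp Require Import all_boot all_order all_algebra.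
Set Implicit Arguments. Unset Strict Implicit. Unset Printing Implicit Defensive.
Import Order.TTheory GRing.Theory Num.Theory.

Definition edge_set n (E : rel 'I_n) : {set 'I_n * 'I_n} := [set e | E e.1 e.2].

Definition induced n (E : rel 'I_n) (A : {set 'I_n}) : rel 'I_n :=
  fun x y => [&& E x y, x \in A & y \in A].

Definition strongly_connected n (E : rel 'I_n) : bool :=
  [forall x, forall y, connect E x y].

Definition strongly_connected_set n (E : rel 'I_n) (W : {set 'I_n}) : bool :=
  [forall x in W, forall y in W, connect (induced E W) x y].

Definition outdeg n (a : {set 'I_n * 'I_n}) (x : 'I_n) : nat :=
  #|[set e in a | e.1 == x]|.

Definition edge_rel n (a : {set 'I_n * 'I_n}) : rel 'I_n := fun x y => (x, y) \in a.

Definition acyclic n (a : {set 'I_n * 'I_n}) : bool :=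
  [forall e in a, ~~ connect (edge_rel a) e.2 e.1].

Definition rooted_forest n (E : rel 'I_n) (U : {set 'I_n}) (a : {set 'I_n * 'I_n}) : bool :=
  [&& a \subset edge_set E,
      [forall x in U, outdeg a x == 0%N],
      [forall x in ~: U, outdeg a x == 1%N] & acyclic a].

Definition spanning_tree n (E : rel 'I_n) (v : 'I_n) (a : {set 'I_n * 'I_n}) : bool :=
  rooted_forest E [set v] a.

(* State of the exploration algorithm:
   A, F, the FIFO list L, and the list of (erased vertex, erasing edge). *)
Record xstate n := XState {
  stA : {set 'I_n};
  stF : {set 'I_n * 'I_n};
  stL : seq ('I_n * 'I_n);
  stEr : seq ('I_n * ('I_n * 'I_n)) }.

Definition xstep n (a : {set 'I_n * 'I_n}) (s : xstate n) : xstate n :=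
  match stL s with
  | [::] => s
  | e :: L' =>
    let u := e.1 in
    if e \in a then
      let F' := [set f in stF s | f.1 != u] in
      XState (u |: stA s) F'
        ([seq f <- L' | f.1 != u] ++ [seq (x, u) | x <- enum 'I_n & (x, u) \in F'])
        (stEr s)
    else
      XState (stA s) [set f in stF s | (f.1 != u) && (f.2 != u)]
        [seq f <- L' | (f.1 != u) && (f.2 != u)]
        ((u, e) :: stEr s)
  end.

Definition xinit n (E : rel 'I_n) (v : 'I_n) : xstate n :=
  XState [set v] [set e | E e.1 e.2 && (e.1 != v)]
    [seq (x, v) | x <- enum 'I_n & E x v] [::].

(* Each iteration removes at least one edge from L and at most n^2 edges are ever
   inserted, so n^2 + 1 iterations reach the end of the algorithm. *)
Definition explore n (E : rel 'I_n) (v : 'I_n) (a : {set 'I_n * 'I_n}) : xstate n :=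
  iter (n ^ 2).+1 (xstep a) (xinit E v).

Definition phi n (E : rel 'I_n) (v : 'I_n) (a : {set 'I_n * 'I_n}) : {set 'I_n} :=
  stA (explore E v a).

Definition psi n (E : rel 'I_n) (v : 'I_n) (a : {set 'I_n * 'I_n}) : {set 'I_n} :=
  let A := phi E v a in
  [set x in A | connect (induced E A) v x && connect (induced E A) x v].

Definition erased n (E : rel 'I_n) (v : 'I_n) (a : {set 'I_n * 'I_n}) : {set 'I_n} :=
  [set u | u \in [seq p.1 | p <- stEr (explore E v a)]].

Definition erasing_edge n (E : rel 'I_n) (v : 'I_n) (a : {set 'I_n * 'I_n}) (u : 'I_n)
  : 'I_n * 'I_n :=
  head (u, u) [seq p.2 | p <- stEr (explore E v a) & p.1 == u].

Definition forest_f n (W : {set 'I_n}) (b : {set 'I_n * 'I_n}) : {set 'I_n * 'I_n} :=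
  [set e in b | e.1 \notin W].

Definition forest_fF n (E : rel 'I_n) (w : 'I_n) (W : {set 'I_n})
  (b : {set 'I_n * 'I_n}) (Fr : {set 'I_n}) : {set 'I_n * 'I_n} :=
  [set e in forest_f W b | e.1 \notin Fr] :|: [set erasing_edge E w b u | u in Fr].

(* coefficient of delta_f in nu_b *)
Definition nu (R : numFieldType) n (E : rel 'I_n) (w : 'I_n) (W : {set 'I_n})
  (b : {set 'I_n * 'I_n}) (f : {set 'I_n * 'I_n}) : R :=
  (\sum_(Fr : {set 'I_n} | (Fr \subset erased E w b) && (forest_fF E w W b Fr == f))
     (-1) ^+ #|Fr|)%R.

(* Main.v *)
Require Import Defs.
From HB Require Import structures.
From mathcomp Require Import all_boot all_order all_algebra.
Import Order.TTheory GRing.Theory Num.Theory.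
Set Implicit Arguments. Unset Strict Implicit. Unset Printing Implicit Defensive.

Definition xinv n (s : xstate n) : Prop :=
 [/\ {subset stL s <= stF s},
     forall e, e \in stF s -> e.1 \notin stA s,
     forall p, p \in stEr s -> [/\ p.1 \notin stA s, (forall e, e \in stF s -> e.1 != p.1) & p.2.1 = p.1]
   & uniq [seq p.1 | p <- stEr s]].

Lemma inv_init n (E : rel 'I_n) v : irreflexive E -> xinv (xinit E v).
Proof.
move=> irr; split => //=.
- move=> e /mapP [x]; rewrite mem_filter mem_enum andbT => Exv ->.
  rewrite inE /= Exv /=; apply/eqP => xv; by rewrite xv irr in Exv.
- by move=> e; rewrite !inE => /andP[].
Qed.

Lemma inv_step n a (s : xstate n) : xinv s -> xinv (xstep a s).
Proof.
case: s => A F L Er; rewrite /xstep /=.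
case: L => [|e L'] //= [HL HF HE HU].
have eF : e \in F by apply: HL; rewrite inE eqxx.
case: ifP => ea; split => /=.
- move=> f; rewrite mem_cat => /orP[]; first by rewrite mem_filter inE => /andP[-> fL]; rewrite HL // inE fL orbT.
  by move=> /mapP [x]; rewrite mem_filter => /andP[+ _] ->.
- move=> f; rewrite inE => /andP[fF fu]; rewrite in_setU1 negb_or fu; exact: HF.
- move=> p pE; have [pA pF p21] := HE _ pE; split => //.
  + rewrite in_setU1 negb_or pA andbT; apply/eqP => up; by move: (pF _ eF); rewrite up eqxx.
  + by move=> f; rewrite inE => /andP[/pF].
- done.
- by move=> f; rewrite mem_filter => /andP[/andP[a1 a2] fL]; rewrite inE a1 a2 HL // inE fL orbT.
- by move=> f; rewrite inE => /andP[/HF].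
- move=> p; rewrite inE => /orP[/eqP -> /= | pE].
  + split => //; first exact: HF.
    by move=> f; rewrite inE => /andP[_ /andP[]].
  + have [pA pF p21] := HE _ pE; split => //.
    by move=> f; rewrite inE => /andP[/pF].
- rewrite HU andbT; apply/mapP => -[p pE /= ep]. have [_ pF _] := HE _ pE.
  by move: (pF _ eF); rewrite ep eqxx.
Qed.


Lemma step_cases n (a : {set 'I_n * 'I_n}) (s : xstate n) :
 [\/ stL s = [::] /\ xstep a s = s,
     exists e L', [/\ stL s = e :: L', e \in a, stA (xstep a s) = e.1 |: stA s & stEr (xstep a s) = stEr s] |
     exists e L', [/\ stL s = e :: L', e \notin a, stA (xstep a s) = stA s & stEr (xstep a s) = (e.1,e) :: stEr s]].
Proof.
case: s => A F L Er; rewrite /xstep /=; case: L => [|e L'].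
  by constructor 1.
case: ifP => ea; [constructor 2 | constructor 3]; exists e, L'; by rewrite ?ea.
Qed.

Lemma xstep_agree n (a a' : {set 'I_n * 'I_n}) (s : xstate n) :
  (forall e L', stL s = e :: L' -> (e \in a) = (e \in a')) -> xstep a s = xstep a' s.
Proof.
case: s => A F L Er; rewrite /xstep /=; case: L => [|e L'] // H.
by rewrite (H e L').
Qed.

Definition run n (E : rel 'I_n) w (a : {set 'I_n * 'I_n}) k := iter k (xstep a) (xinit E w).

Lemma inv_run n (E : rel 'I_n) w a k : irreflexive E -> xinv (run E w a k).
Proof. move=> irr; elim: k => [|k IH] /=; [exact: inv_init | exact: inv_step]. Qed.

Lemma A_mono n (E : rel 'I_n) w a k m : k <= m -> stA (run E w a k) \subset stA (run E w a m).
Proof.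
move/subnK <-; elim: (m - k) => [|d IH] //=.
apply: subset_trans IH _; rewrite /run ?addSn /=.
case: (step_cases a (iter (d + k) (xstep a) (xinit E w))) => [[_ ->]|[e [L' [_ _ -> _]]]|[e [L' [_ _ -> _]]]] //.
exact: subsetUr.
Qed.

Lemma Er_mono n (E : rel 'I_n) w a k m : k <= m ->
  exists l, stEr (run E w a m) = l ++ stEr (run E w a k).
Proof.
move/subnK <-; elim: (m - k) => [|d [l IH]]; first by exists [::].
rewrite /run ?addSn /=.
case: (step_cases a (iter (d + k) (xstep a) (xinit E w))) => [[_ ->]|[e [L' [_ _ _ ->]]]|[e [L' [_ _ _ ->]]]].
- by exists l.
- by exists l.
- by exists ((e.1, e) :: l); rewrite IH.
Qed.

Lemma erased_notin n (E : rel 'I_n) w a k m p : irreflexive E ->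
  p \in stEr (run E w a k) -> k <= m -> p.1 \notin stA (run E w a m).
Proof.
move=> irr pE km; have [l El] := @Er_mono _ E w a _ _ km.
have [_ _ HE _] := @inv_run _ E w a m irr.
by have [] := HE p; rewrite // El mem_cat pE orbT.
Qed.

Lemma run_agree n (E : rel 'I_n) w (a a' : {set 'I_n * 'I_n}) K :
  (forall k, k < K -> forall e L', stL (run E w a k) = e :: L' -> (e \in a) = (e \in a')) ->
  forall k, k <= K -> run E w a k = run E w a' k.
Proof.
move=> H; elim => [|k IH] // kK.
rewrite /run /= -/(run E w a k) -/(run E w a' k) -IH ?(ltnW kK) //.
by apply: xstep_agree; apply: H.
Qed.

Lemma transition (P : nat -> bool) N : ~~ P 0 -> P N -> exists k, [/\ k < N, ~~ P k & P k.+1].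
Proof.
elim: N => [|N IH] P0 PN; first by rewrite PN in P0.
case: (boolP (P N)) => PN'.
  by have [k [kN H1 H2]] := IH P0 PN'; exists k; split => //; exact: ltnW.
by exists N.
Qed.


Definition aW n (W : {set 'I_n}) (f : {set 'I_n * 'I_n}) : {set 'I_n * 'I_n} :=
  f :|: [set e | e.1 \in W].

Lemma outdeg_w n (E : rel 'I_n) w b : spanning_tree E w b -> outdeg b w = 0.
Proof.
by case/and4P => _ /forall_inP H _ _; apply/eqP; apply: H; rewrite inE.
Qed.

Lemma outdeg_u n (E : rel 'I_n) w b u : spanning_tree E w b -> u != w -> outdeg b u = 1.
Proof.
by case/and4P => _ _ /forall_inP H _ uw; apply/eqP; apply: H; rewrite !inE.
Qed.

Lemma outdeg_uniq n (a : {set 'I_n * 'I_n}) u e0 e :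
  outdeg a u = 1 -> e0 \in a -> e0.1 = u -> e.1 = u -> (e \in a) = (e == e0).
Proof.
rewrite /outdeg => /eqP /cards1P [x Hx] e0a e01 e1.
have : e0 \in [set e in a | e.1 == u] by rewrite inE e0a e01 eqxx.
rewrite Hx inE => /eqP ->.
apply/idP/eqP => [ea|->].
  have : e \in [set e in a | e.1 == u] by rewrite inE ea e1 eqxx.
  by rewrite Hx inE => /eqP.
have : x \in [set e in a | e.1 == u] by rewrite Hx inE.
by rewrite inE => /andP[].
Qed.

Lemma outdeg0_notin n (a : {set 'I_n * 'I_n}) u e :
  outdeg a u = 0 -> e.1 = u -> e \notin a.
Proof.
rewrite /outdeg => /eqP; rewrite cards_eq0 => /eqP H e1; apply/negP => ea.
have : e \in [set e in a | e.1 == u] by rewrite inE ea e1 eqxx.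
by rewrite H inE.
Qed.

Lemma forest_rooted n (E : rel 'I_n) w (W : {set 'I_n}) b :
  spanning_tree E w b -> w \in W -> rooted_forest E W (forest_f W b).
Proof.
move=> sb wW; move: (sb) => /and4P [sub _ _ acy].
have fb : forest_f W b \subset b by apply/subsetP => e; rewrite inE => /andP[].
apply/and4P; split.
- exact: subset_trans sub.
- apply/forall_inP => x xW; rewrite /outdeg cards_eq0; apply/eqP; apply/setP => e.
  rewrite !inE; apply/negP => /andP[/andP[_ eW] /eqP ex]; by rewrite ex xW in eW.
- apply/forall_inP => x; rewrite inE => xW.
  have xw : x != w by apply/eqP => xw; rewrite xw wW in xW.
  rewrite -(outdeg_u sb xw) /outdeg; apply/eqP; apply: eq_card => e.
  rewrite !inE; apply/andP/andP => [[/andP[] //]|[eb /eqP ex]]; by rewrite eb ex xW.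
- apply/forall_inP => e ef; move/forall_inP: acy => /(_ e (subsetP fb _ ef)).
  apply: contra; apply: connect_sub => x y; rewrite /edge_rel => xy.
  by apply: connect1; rewrite /edge_rel (subsetP fb _ xy).
Qed.

Lemma psi_sub n (E : rel 'I_n) w b x : x \in psi E w b -> x \in stA (run E w b (n ^ 2).+1).
Proof. by rewrite inE => /andP[]. Qed.

Lemma K0 n (E : rel 'I_n) w (W : {set 'I_n}) b : irreflexive E -> psi E w b = W ->
  forall k, k <= (n ^ 2).+1 -> run E w b k = run E w (aW W (forest_f W b)) k.
Proof.
move=> irr pW; apply: run_agree => k kN e L' Le.
rewrite !inE /=; case: (boolP (e.1 \in W)) => eW; last by rewrite andbT orbF.
rewrite orbT; apply/negPn/negP => eb.
case: (step_cases b (run E w b k)) => [[Le' _]|[e' [L'' [Le' e'b _ _]]]|[e' [L'' [Le' e'b _ HEr]]]];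
  rewrite Le in Le'; case: Le' => // ee' _; subst e'.
- by rewrite e'b in eb.
- have := @erased_notin _ E w b k.+1 (n ^ 2).+1 (e.1, e) irr.
  rewrite /run /= -/(run E w b k) HEr inE eqxx => /(_ isT kN) /=.
  by rewrite -pW in eW; rewrite (psi_sub eW).
Qed.


Fixpoint num (s : seq bool) : nat := if s is b :: s' then b * 2 ^ size s' + num s' else 0.

Lemma num_lt2 s : num s < 2 ^ size s.
Proof.
elim: s => [|b s IH] //=; rewrite expnS mul2n -addnn.
case: b; rewrite ?mul1n ?mul0n ?add0n.
  by rewrite ltn_add2l.
exact: ltn_addr.
Qed.

Lemma num_cat_lt p s t : size s = size t -> num (p ++ false :: s) < num (p ++ true :: t).
Proof.
move=> st; elim: p => [|b p IH] /=.
  by rewrite mul0n add0n mul1n -st ltn_addr // num_lt2.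
by rewrite !size_cat /= st ltn_add2l.
Qed.

Lemma num_map_lt (d1 d2 : nat -> bool) k N : k < N -> (forall i, i < k -> d1 i = d2 i) ->
  d1 k = false -> d2 k = true -> num (map d1 (iota 0 N)) < num (map d2 (iota 0 N)).
Proof.
move=> kN H1 H2 H3.
have -> : N = k + (N - k.+1).+1 by rewrite -addSnnS subnKC.
rewrite iotaD /= add0n !map_cat /= H2 H3.
have -> : map d1 (iota 0 k) = map d2 (iota 0 k).
  by apply/eq_in_map => i; rewrite mem_iota add0n => /H1.
by apply: num_cat_lt; rewrite !size_map.
Qed.

Lemma head_filter_uniq (T U : eqType) (s : seq (T * U)) u e d :
  uniq (map fst s) -> (u, e) \in s -> head d [seq p.2 | p <- s & p.1 == u] = e.
Proof.
elim: s => [|p s IH] //= /andP[pn us]; rewrite inE => /orP[/eqP <-|ues] /=.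
  by rewrite eqxx.
case: ifP => [/eqP pu|_]; last exact: IH.
by move: pn; rewrite pu; case/negP; apply/mapP; exists (u, e).
Qed.

Lemma head_filter_in (T U : eqType) (s : seq (T * U)) u d :
  u \in map fst s -> exists2 p, p \in s & p.1 = u /\ head d [seq p.2 | p <- s & p.1 == u] = p.2.
Proof.
elim: s => [|p s IH] //=; rewrite inE; case: (eqVneq u p.1) => [up _|up /= us].
  by exists p; rewrite ?inE ?eqxx //= up eqxx.
have [q qs [q1 qh]] := IH us; exists q; first by rewrite inE qs orbT.
split => //=; rewrite eq_sym (negbTE up) /=.
Qed.

Lemma ee_src n (E : rel 'I_n) w b u : irreflexive E -> u \in erased E w b ->
  (erasing_edge E w b u).1 = u.
Proof.
move=> irr; rewrite inE /erasing_edge => /(head_filter_in (u, u)) [p pE [p1 ->]].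
have [_ _ HE _] := @inv_run _ E w b (n ^ 2).+1 irr.
by have [_ _ ->] := HE p pE.
Qed.

Lemma agree_g n (E : rel 'I_n) w (W : {set 'I_n}) b (Fr : {set 'I_n}) (e : 'I_n * 'I_n) : irreflexive E ->
  Fr \subset erased E w b -> e.1 \notin Fr ->
  (e \in aW W (forest_fF E w W b Fr)) = (e \in aW W (forest_f W b)).
Proof.
move=> irr sub eF; rewrite /aW /forest_fF !in_setU; congr (_ || _).
rewrite ?inE; apply/orP/idP => [[/andP[-> _] //|/imsetP [u uF eu]]|ef].
  by move: eF; rewrite eu ee_src ?(subsetP sub u uF) // uF.
by left; rewrite ef.
Qed.


Definition dec n (a : {set 'I_n * 'I_n}) (s : xstate n) : bool :=
  if stL s is e :: _ then e \in a else false.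

Definition key n (E : rel 'I_n) w (W : {set 'I_n}) (f : {set 'I_n * 'I_n}) : nat :=
  num [seq dec (aW W f) (run E w (aW W f) i) | i <- iota 0 (n ^ 2).+1].

Lemma key_lt n (E : rel 'I_n) w (W : {set 'I_n}) b (Fr : {set 'I_n}) :
  irreflexive E -> psi E w b = W -> Fr \subset erased E w b -> Fr != set0 ->
  key E w W (forest_f W b) < key E w W (forest_fF E w W b Fr).
Proof.
move=> irr pW sub FrN.
set f := forest_f W b; set g := forest_fF E w W b Fr.
set N := (n ^ 2).+1.
set aF := aW W f; set aG := aW W g.
have HX : explore E w b = run E w aF N := K0 irr pW (leqnn _).
have Hs : forall k, run E w aF k.+1 = xstep aF (run E w aF k) by [].
pose Q k := (k < N) && (if stL (run E w aF k) is e :: _ then e.1 \in Fr else false).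
have exQ : exists k, Q k.
  have [u uF] := set0Pn _ FrN.
  have := subsetP sub u uF; rewrite /erased inE HX => uE.
  have [k [kN P1 P2]] := @transition (fun k => u \in [seq p.1 | p <- stEr (run E w aF k)]) N isT uE.
  exists k; rewrite /Q kN /=.
  move: P2; rewrite Hs.
  case: (step_cases aF (run E w aF k)) => [[_ ->]|[e [L' [Le _ _ ->]]]|[e [L' [Le _ _ ->]]]];
    rewrite ?(negbTE P1) //.
  by rewrite Le /= inE (negbTE P1) orbF => /eqP <-.
case: (ex_minnP exQ) => k0 /andP[k0N Hk0] k0min.
case Lk0 : (stL (run E w aF k0)) Hk0 => [|e0 L0] // e0F.
have e0E : e0.1 \in erased E w b := subsetP sub _ e0F.
have e0a : e0 \notin aF.
  apply/negP => ea.
  move: (e0E); rewrite /erased inE HX => /mapP [p pE p1].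
  have := @erased_notin _ E w aF N N p irr pE (leqnn _); rewrite -p1.
  move/negP; apply; apply: (subsetP (@A_mono _ E w aF k0.+1 N k0N)); rewrite Hs.
  case: (step_cases aF (run E w aF k0)) => [[Le _]|[e [L' [Le _ -> _]]]|[e [L' [Le ena _ _]]]];
    rewrite Lk0 in Le; case: Le => // ee _; subst e.
  - by rewrite in_setU1 eqxx.
  - by rewrite ea in ena.
have HEr : stEr (run E w aF k0.+1) = (e0.1, e0) :: stEr (run E w aF k0).
  rewrite Hs.
  case: (step_cases aF (run E w aF k0)) => [[Le _]|[e [L' [Le ea _ _]]]|[e [L' [Le _ _ ->]]]];
    rewrite Lk0 in Le; case: Le => // ee _; subst e => //.
  by rewrite ea in e0a.
have HEE : erasing_edge E w b e0.1 = e0.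
  rewrite /erasing_edge HX; apply: head_filter_uniq.
    by have [_ _ _] := @inv_run _ E w aF N irr.
  have [l ->] := @Er_mono _ E w aF _ _ k0N.
  by rewrite HEr mem_cat inE eqxx orbT.
have notFr : forall k e L', k < k0 -> stL (run E w aF k) = e :: L' -> e.1 \notin Fr.
  move=> k e L' kk Le; apply/negP => eF.
  have : Q k by rewrite /Q Le eF andbT (ltn_trans kk k0N).
  by move/k0min; rewrite leqNgt kk.
have agree : forall k, k <= k0 -> run E w aF k = run E w aG k.
  apply: run_agree => k kk e L' Le; symmetry; apply: agree_g => //.
  exact: notFr kk Le.
apply: (@num_map_lt _ _ k0) => //.
- move=> i ik; rewrite -agree ?(ltnW ik) // /dec.
  case Le : (stL (run E w aF i)) => [|e L'] //; symmetry; apply: agree_g => //.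
  exact: notFr ik Le.
- by rewrite /dec Lk0 (negbTE e0a).
- rewrite -agree // /dec Lk0 /aG /aW /g /forest_fF !in_setU; apply/orP; left; apply/orP; right.
  by rewrite -HEE; apply: imset_f.
Qed.


Lemma tree_inj n (E : rel 'I_n) w (W : {set 'I_n}) b b' : irreflexive E ->
  spanning_tree E w b -> spanning_tree E w b' -> psi E w b = W -> psi E w b' = W ->
  forest_f W b = forest_f W b' -> b = b'.
Proof.
move=> irr sb sb' pb pb' ff.
set N := (n ^ 2).+1.
have R k : k <= N -> run E w b k = run E w b' k.
  by move=> kN; rewrite (K0 irr pb kN) (K0 irr pb' kN) ff.
apply/setP => e; case: (boolP (e.1 \in W)) => eW; last first.
  have : (e \in forest_f W b) = (e \in forest_f W b') by rewrite ff.
  by rewrite !inE eW !andbT.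
have uA : e.1 \in stA (run E w b N) by apply: psi_sub; rewrite pb.
case: (eqVneq e.1 w) => [uw|uw].
  by rewrite (negbTE (outdeg0_notin (outdeg_w sb) uw)) (negbTE (outdeg0_notin (outdeg_w sb') uw)).
have u0 : e.1 \notin stA (run E w b 0) by rewrite /= inE.
have [k [kN P1 P2]] := @transition (fun k => e.1 \in stA (run E w b k)) N u0 uA.
move: P2; rewrite /= -/(run E w b k).
case: (step_cases b (run E w b k)) => [[_ ->]|[e0 [L' [Le e0b -> _]]]|[e0 [L' [Le _ -> _]]]];
  rewrite ?(negbTE P1) //.
rewrite in_setU1 (negbTE P1) orbF => /eqP ue0.
have e0b' : e0 \in b'.
  have HA' : stA (run E w b' k.+1) = stA (run E w b k.+1) by rewrite R.
  move: HA'; rewrite /= -/(run E w b' k) -R ?(ltnW kN) //.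
  rewrite -/(run E w b k).
  case: (step_cases b' (run E w b k)) => [[Le1 _]|[e1 [L1 [Le1 e1b _ _]]]|[e1 [L1 [Le1 _ HA1 _]]]];
    rewrite Le in Le1; case: Le1 => // ee _; subst e1 => //.
  rewrite HA1; case: (step_cases b (run E w b k)) => [[Le2 _]|[e2 [L2 [Le2 _ -> _]]]|[e2 [L2 [Le2 e2n _ _]]]];
    rewrite Le in Le2; case: Le2 => // ee _; subst e2.
  - move=> HH; move: P1; rewrite HH in_setU1 ue0 eqxx; done.
  - by rewrite e0b in e2n.
rewrite (outdeg_uniq (outdeg_u sb uw) e0b (esym ue0)) //.
by rewrite (outdeg_uniq (outdeg_u sb' uw) e0b' (esym ue0)).
Qed.


Lemma fF0 n (E : rel 'I_n) w (W : {set 'I_n}) b : forest_fF E w W b set0 = forest_f W b.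
Proof.
apply/setP => e; rewrite /forest_fF imset0 setU0 inE in_set0 andbT //.
Qed.

Lemma nu_self (R : numFieldType) n (E : rel 'I_n) w (W : {set 'I_n}) b :
  irreflexive E -> psi E w b = W -> nu R E w W b (forest_f W b) = 1%R.
Proof.
move=> irr pb; rewrite /nu (big_pred1 set0) ?cards0 ?expr0 // => Fr /=.
case: (eqVneq Fr set0) => [->|FrN]; first by rewrite sub0set fF0 eqxx.
case: (boolP (Fr \subset erased E w b)) => //= sub.
apply/negbTE/eqP => H.
by have := key_lt irr pb sub FrN; rewrite H ltnn.
Qed.

Unset Implicit Arguments.
Theorem lemma4p5 (R : numFieldType) (n : nat) (E : rel 'I_n) (W : {set 'I_n}) (w : 'I_n) :
  irreflexive E ->
  strongly_connected E ->
  strongly_connected_set E W ->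
  w \in W ->
  forall c : {set 'I_n * 'I_n} -> R,
    (forall f : {set 'I_n * 'I_n}, rooted_forest E W f ->
       (\sum_(b : {set 'I_n * 'I_n} | spanning_tree E w b && (psi E w b == W))
          c b * nu R E w W b f)%R = 0%R) ->
    forall b : {set 'I_n * 'I_n}, spanning_tree E w b -> psi E w b = W -> c b = 0%R.
Proof.
move=> irr _ _ wW c Hc b0 sb0 pb0.
apply/eqP; apply/negPn/negP => cb0.
pose P b := [&& spanning_tree E w b, psi E w b == W & c b != 0%R].
have Pb0 : P b0 by rewrite /P sb0 pb0 eqxx cb0.
case: (arg_minnP (fun b => key E w W (forest_f W b)) Pb0) => b /and3P [sb /eqP pb cb] bmin.
have := Hc _ (forest_rooted sb wW).
rewrite (bigD1 b) /=; last by rewrite sb pb eqxx.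
rewrite nu_self // mulr1 big1 ?addr0; first by move/eqP; rewrite (negbTE cb).
move=> b' /andP [/andP [sb' /eqP pb'] bb'].
case: (eqVneq (c b') 0%R) => [->|cb']; first by rewrite mul0r.
have kle : key E w W (forest_f W b) <= key E w W (forest_f W b') by apply: bmin; rewrite /P sb' pb' eqxx cb'.
rewrite /nu big_pred0 ?mulr0 // => Fr.
case: (eqVneq Fr set0) => [->|FrN].
  rewrite sub0set fF0 /=; apply/negbTE/eqP => H.
  by move: bb'; rewrite (tree_inj irr sb' sb pb' pb H) eqxx.
case: (boolP (Fr \subset erased E w b')) => //= sub.
apply/negbTE/eqP => H.
by have := key_lt irr pb' sub FrN; rewrite H ltnNge kle.
Qed.
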